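(* Assume $p_j=1$ for all $j\in[n]$. Let $\mathcal B_{IPR}=\{B_1,\dots,B_m\}$ be the partition of the $n$ jobs returned by IPR with $\rho=2$. Then $b_{\max}\le\frac{W}{\ell}+1$, where, for the final tentative assignment, $b_{\max}=\max_{B\in\mathcal B_{IPR},|B|\ge2}p(B)$, $\mathcal M_{\max}$ is the collection containing a bag of processing time $b_{\max}$, $W=\sum_{B\in\mathcal M_{\max}}p(B)$ and $\ell=|\mathcal M_{\max}|$.
   Context: Jobs $j\in[n]$ have processing times $p_j\ge0$; for a bag $B$, $p(B)=\sum_{j\in B}p_j$. There are $m$ machines with predicted speeds $\hat s_1\ge\dots\ge\hat s_m$; $opt(\mathbf p,\hat{\mathbf s})$ is the minimum makespan $\max_i(\text{load of } i)/\hat s_i$ of assigning jobs to machines with speeds $\hat{\mathbf s}$. Algorithm IPR. Input: $\hat{\mathbf s}$, $\mathbf p$, $\alpha\in(0,1)$, accuracy $\epsilon\in(0,1)$, $\rho\ge1$. (1) Compute a partition $B_1,\dots,B_m$ with $p(B_1)\ge\dots\ge p(B_m)$ such that putting $B_i$ on machine $i$ has makespan at most $(1+\epsilon)opt(\mathbf p,\hat{\mathbf s})$ under speeds $\hat{\mathbf s}$. (2) Set $\overline{OPT}_C=\max_i p(B_i)/\hat s_i$ and tentative assignment $\mathcal M_i=\{B_i\}$. (3) While $\max\{p(B): B\in\cup_i\mathcal M_i, |B|\ge2\}>\rho\min\{p(B):B\in\cup_i\mathcal M_i\}$: compute $\mathcal M'=$ LPT-Rebalance$(\mathcal M)$; if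 $\max_i\sum_{B\in\mathcal M'_i}p(B)/\hat s_i>(1+\alpha)\overline{OPT}_C$ return the current bags $\cup_i\mathcal M_i$; else $\mathcal M\leftarrow\mathcal M'$. (4) Return the bags $\cup_i\mathcal M_i$. LPT-Rebalance: let $B_{\min}$ be a bag of minimum $p(B)$ over all bags, $\mathcal M_{\min}$ its collection, $\mathcal M_{\max}$ a collection containing a bag of maximum $p(B)$ among bags with at least two jobs. Move $B_{\min}$ into $\mathcal M_{\max}$, let $\ell=|\mathcal M_{\max}|$, pool its jobs and redistribute them into $\ell$ new bags by LPT (jobs in non-increasing processing time, each into a currently least-loaded bag); these form the new $\mathcal M_{\max}$. *)

(* Defs.v *)
From HB Require Import structures.
From mathcomp Require Import all_boot all_order all_algebra.
Set Implicit Arguments. Unset Strict Implicit. Unset Printing Implicit Defensive.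
Import Order.TTheory GRing.Theory Num.Theory.
Local Open Scope ring_scope.

(* Jobs are 'I_n, machines are 'I_m (machine 0 = fastest).
   A bag is a set of jobs; a tentative assignment (state) maps each machine i
   to its collection M_i, a list of bags (bags are identified by position). *)

Section IPR.
Variables (R : realFieldType) (n m : nat) (p : 'I_n -> R) (s : 'I_m -> R).

Definition pB (B : {set 'I_n}) : R := \sum_(j in B) p j.

Definition maxs (xs : seq R) : R := foldr Num.max 0 xs.

Definition state := 'I_m -> seq {set 'I_n}.

Definition bag_at (M : state) (i : 'I_m) (k : nat) : {set 'I_n} :=
  nth set0 (M i) k.

Definition makespan_asg (g : {ffun 'I_n -> 'I_m}) : R :=
  maxs [seq (\sum_(j | g j == i) p j) / s i | i <- enum 'I_m].

Definition makespan_part (B : 'I_m -> {set 'I_n}) : R :=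
  maxs [seq pB (B i) / s i | i <- enum 'I_m].

Definition makespan_state (M : state) : R :=
  maxs [seq (\sum_(B <- M i) pB B) / s i | i <- enum 'I_m].

Definition is_partition (B : 'I_m -> {set 'I_n}) : Prop :=
  (forall i i' : 'I_m, i != i' -> [disjoint B i & B i']) /\
  (forall j : 'I_n, exists i, j \in B i).

(* Step (1): B_1..B_m partition, p(B_1) >= ... >= p(B_m), and makespan
   <= (1+eps) opt, i.e. <= (1+eps) * makespan of every assignment. *)
Definition step1_ok (eps : R) (B : 'I_m -> {set 'I_n}) : Prop :=
  [/\ is_partition B,
      (forall i i' : 'I_m, (i <= i')%N -> pB (B i') <= pB (B i)) &
      forall g : {ffun 'I_n -> 'I_m}, makespan_part B <= (1 + eps) * makespan_asg g].

(* while-condition: max{p(B) : |B| >= 2} > rho * min{p(B)} *)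
Definition loop_cond (rho : R) (M : state) : Prop :=
  exists i k, [/\ (k < size (M i))%N, (2 <= #|bag_at M i k|)%N &
    exists i' k', (k' < size (M i'))%N /\ rho * pB (bag_at M i' k') < pB (bag_at M i k)].

Inductive lpt_run : seq 'I_n -> seq {set 'I_n} -> seq {set 'I_n} -> Prop :=
| lpt_nil bs : lpt_run [::] bs bs
| lpt_cons j js bs k bs' :
    (k < size bs)%N ->
    (forall k', (k' < size bs)%N -> pB (nth set0 bs k) <= pB (nth set0 bs k')) ->
    lpt_run js (set_nth set0 bs k (j |: nth set0 bs k)) bs' ->
    lpt_run (j :: js) bs bs'.

Definition LPT (l : nat) (J : {set 'I_n}) (bs : seq {set 'I_n}) : Prop :=
  exists js, [/\ perm_eq js (enum J), sorted (fun a b => p b <= p a) js &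
                 lpt_run js (nseq l set0) bs].

Definition rem_at (k : nat) (xs : seq {set 'I_n}) := take k xs ++ drop k.+1 xs.

Definition rebalance (M M' : state) : Prop :=
  exists (imin : 'I_m) kmin (imax : 'I_m) kmax,
   [/\ (kmin < size (M imin))%N,
       (forall i k, (k < size (M i))%N -> pB (bag_at M imin kmin) <= pB (bag_at M i k)),
       (kmax < size (M imax))%N,
       (2 <= #|bag_at M imax kmax|)%N &
       (forall i k, (k < size (M i))%N -> (2 <= #|bag_at M i k|)%N ->
          pB (bag_at M i k) <= pB (bag_at M imax kmax))] /\
   let Bmin := bag_at M imin kmin in
   let Mrem := fun i => if i == imin then rem_at kmin (M i) else M i in
   let coll := Bmin :: Mrem imax in
   exists newbags, LPT (size coll) (\bigcup_(B <- coll) B) newbags /\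
     forall i, M' i = if i == imax then newbags else Mrem i.

(* Step (3): ipr_loop rho alpha OPTC M Mf  means that the while loop started
   in tentative assignment M terminates with final tentative assignment Mf. *)
Inductive ipr_loop (rho alpha OPTC : R) : state -> state -> Prop :=
| loop_stop M : ~ loop_cond rho M -> ipr_loop rho alpha OPTC M M
| loop_reject M M' : loop_cond rho M -> rebalance M M' ->
    (1 + alpha) * OPTC < makespan_state M' -> ipr_loop rho alpha OPTC M M
| loop_accept M M' M'' : loop_cond rho M -> rebalance M M' ->
    makespan_state M' <= (1 + alpha) * OPTC -> ipr_loop rho alpha OPTC M' M'' ->
    ipr_loop rho alpha OPTC M M''.

Definition IPR_final (alpha eps rho : R) (Mf : state) : Prop :=
  exists B : 'I_m -> {set 'I_n}, step1_ok eps B /\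
    ipr_loop rho alpha (makespan_part B) (fun i => [:: B i]) Mf.

End IPR.

(* Main.v *)
Require Import Defs.
From HB Require Import structures.
From mathcomp Require Import all_boot all_order all_algebra.
Import Order.TTheory GRing.Theory Num.Theory.
Local Open Scope ring_scope.

Section Aux.
Variables (R : realFieldType) (n m : nat) (p : 'I_n -> R).
Hypothesis p1 : forall j, p j = 1.

Definition balm (bs : seq {set 'I_n}) :=
  forall B B', B \in bs -> B' \in bs -> pB p B <= pB p B' + 1.

Lemma pBU1 j B : pB p B <= pB p (j |: B) <= pB p B + 1.
Proof.
rewrite /pB; case: (boolP (j \in B)) => jB.
  by rewrite (setUidPr _) ?sub1set // lexx /= lerDl ler01.
by rewrite big_setU1 //= p1 addrC lexx andbT lerDl ler01.
Qed.

Lemma balm_lpt {js bs bs'} : lpt_run p js bs bs' -> balm bs -> balm bs'.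
Proof.
elim=> {js bs bs'} // j js bs k bs' ks hmin _ IH hb; apply: IH.
have hm : forall x, x \in bs -> pB p (nth set0 bs k) <= pB p x.
  by move=> x /(nthP set0) [k' k'lt <-]; apply: hmin.
have hk : nth set0 bs k \in bs by apply: mem_nth.
set y := j |: nth set0 bs k.
have /andP [y1 y2] := pBU1 j (nth set0 bs k).
have mem : forall x, x \in set_nth set0 bs k y -> x = y \/ x \in bs.
  move=> x; rewrite set_nthE ks mem_cat inE => /or3P [h|/eqP->|h].
  - by right; apply: mem_take h.
  - by left.
  - by right; apply: mem_drop h.
move=> B B' /mem [->|hB] /mem [->|hB'].
- by rewrite lerDl ler01.
- by apply: (le_trans y2); rewrite lerD2r hm.
- by apply: (le_trans (hb _ _ hB hk)); rewrite lerD2r.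
- by apply: hb.
Qed.

Lemma balm_nseq l : balm (nseq l set0).
Proof.
move=> B B' /nseqP [-> _] /nseqP [-> _].
by rewrite lerDl ler01.
Qed.

Lemma balm_sub (bs bs' : seq {set 'I_n}) :
  {subset bs' <= bs} -> balm bs -> balm bs'.
Proof. by move=> hs hb B B' /hs hB /hs hB'; apply: hb. Qed.

Lemma balm_rem k bs : balm bs -> balm (rem_at k bs).
Proof.
apply: balm_sub => x; rewrite mem_cat => /orP [h|h].
  exact: mem_take h.
exact: mem_drop h.
Qed.

Lemma balm_loop (s : 'I_m -> R) rho alpha OPTC (M Mf : state n m) :
  ipr_loop p s rho alpha OPTC M Mf -> (forall i, balm (M i)) -> forall i, balm (Mf i).
Proof.
elim=> {M Mf} // M M' M'' _ [imin [kmin [imax [kmax [_ [newbags [[js [_ _ hl]] hM']]]]]]] _ _ IH hb.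
apply: IH => i; rewrite hM'.
case: (i == imax); first exact: (balm_lpt hl (balm_nseq _)).
by case: (i == imin); [apply: balm_rem|]; apply: hb.
Qed.

End Aux.

Theorem lemma11 (R : realFieldType) (n m : nat) (p : 'I_n -> R) (s : 'I_m -> R)
  (alpha eps : R) (Mf : state n m) :
  (forall i, 0 < s i) ->
  (forall i i' : 'I_m, (i <= i')%N -> s i' <= s i) ->
  0 < alpha < 1 -> 0 < eps < 1 ->
  (forall j, p j = 1) ->
  IPR_final p s alpha eps 2 Mf ->
  forall (i : 'I_m) (k : nat),
    (k < size (Mf i))%N ->
    (2 <= #|bag_at Mf i k|)%N ->
    (forall (i' : 'I_m) (k' : nat), (k' < size (Mf i'))%N ->
        (2 <= #|bag_at Mf i' k'|)%N -> pB p (bag_at Mf i' k') <= pB p (bag_at Mf i k)) ->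
    pB p (bag_at Mf i k) <= (\sum_(B <- Mf i) pB p B) / (size (Mf i))%:R + 1.
Proof.
move=> _ _ _ _ p1 [B [_ hl]] i k ks _ _.
have hb := @balm_loop _ _ _ _ p1 _ _ _ _ _ _ hl.
have {hl}hb : balm _ _ p (Mf i).
  apply: hb => i' B1 B2; rewrite !inE => /eqP-> /eqP->.
  by rewrite lerDl ler01.
set b := bag_at Mf i k.
have hbin : b \in Mf i by apply: mem_nth.
have L0 : 0 < (size (Mf i))%:R :> R by rewrite ltr0n; case: (Mf i) ks.
rewrite -lerBlDr ler_pdivlMr //.
have -> : (pB p b - 1) * (size (Mf i))%:R = \sum_(B' <- Mf i) (pB p b - 1).
  rewrite big_const_seq count_predT mulr_natr; elim: (size _) => //= l IH; by rewrite mulrS IH.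
rewrite big_seq [X in _ <= X]big_seq; apply: ler_sum => B' hB'.
by rewrite lerBlDr; apply: hb.
Qed.
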